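(* Let $\rho\in(0,1)\cup(1,\infty)$, $\xi\in\mathbb{R}$, and $H=\frac{1}{2(1+\rho\sinh^2\chi)}\big(\cosh^2\chi P_\chi^2+\frac{P_\phi^2}{\tanh^2\chi}+\xi\sinh^2\chi\big)$ on $(\chi,\phi)\in(0,\infty)\times\mathbb{S}^1$. Consider trajectories of the Hamiltonian flow on the level set $H=E$, $P_\phi=L>0$, with $\phi$ normalized by a rotation so that $\phi=0$ where $\chi$ is minimal. Let $\sigma=2(\rho-1)E-\xi$, $e=\sqrt{1+\frac{L^2\sigma}{(E+L^2/2)^2}}$ and $E_+=L\big[\sqrt{\xi+\rho(\rho-1)L^2}-(\rho-\tfrac12)L\big]$. If $E\in[E_+,\frac{\xi}{2\rho})$ and $\xi-\rho L^2>0$, the trajectories have equation $$\frac{L^2}{\tanh^2\chi}=\Big(E+\frac{L^2}{2}\Big)\big(1+e\cos(2\phi)\big),$$ and they are closed curves since $e<1$. *)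

(* Defs.v *)
From Stdlib Require Import Reals.
From Coquelicot Require Import Coquelicot.
Open Scope R_scope.

Definition Ham (rho xi : R) (chi phi pchi pphi : R) : R :=
  (cosh chi ^ 2 * pchi ^ 2 + pphi ^ 2 / tanh chi ^ 2 + xi * sinh chi ^ 2)
  / (2 * (1 + rho * sinh chi ^ 2)).

(* A trajectory of the Hamiltonian flow, defined for all times t,
   with chi(t) in (0, oo), phi a real lift of the angle in S^1.
   Hamilton's equations:
     chi' = dH/dP_chi, phi' = dH/dP_phi, P_chi' = -dH/dchi, P_phi' = -dH/dphi. *)
Definition hamiltonian_trajectory (rho xi : R)
    (chi phi pchi pphi : R -> R) : Prop :=
  forall t : R,
    0 < chi t /\
    is_derive chi t (Derive (fun p => Ham rho xi (chi t) (phi t) p (pphi t)) (pchi t)) /\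
    is_derive phi t (Derive (fun p => Ham rho xi (chi t) (phi t) (pchi t) p) (pphi t)) /\
    is_derive pchi t (- Derive (fun c => Ham rho xi c (phi t) (pchi t) (pphi t)) (chi t)) /\
    is_derive pphi t (- Derive (fun f => Ham rho xi (chi t) f (pchi t) (pphi t)) (phi t)).

Definition sigma_par (rho xi E : R) : R := 2 * (rho - 1) * E - xi.

Definition ecc2 (rho xi E L : R) : R :=
  1 + L ^ 2 * sigma_par rho xi E / (E + L ^ 2 / 2) ^ 2.

Definition ecc (rho xi E L : R) : R := sqrt (ecc2 rho xi E L).

Definition E_plus (rho xi L : R) : R :=
  L * (sqrt (xi + rho * (rho - 1) * L ^ 2) - (rho - 1 / 2) * L).

(* Main.v *)
Require Import Defs.
From Stdlib Require Import Reals Lra Nsatz.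
From Coquelicot Require Import Coquelicot.
Open Scope R_scope.
Lemma ch2 x : cosh x ^ 2 = 1 + sinh x ^ 2.
Proof. unfold cosh, sinh. rewrite exp_Ropp. pose proof (exp_pos x). field. lra. Qed.
Lemma cosh_pos x : 0 < cosh x.
Proof. unfold cosh. pose proof (exp_pos x). pose proof (exp_pos (-x)). lra. Qed.

Lemma sinh_pos x : 0 < x -> 0 < sinh x.
Proof. intros. rewrite <- sinh_0. now apply sinh_lt. Qed.

Lemma Dchi rho xi x f p pp : 0 < x -> 0 <= rho ->
  is_derive (fun c => Ham rho xi c f p pp) x
   (((2*cosh x*sinh x*p^2 - 2*pp^2*cosh x/sinh x^3 + 2*xi*sinh x*cosh x)*(1+rho*sinh x^2)
     - (cosh x ^ 2 * p ^ 2 + pp ^ 2 * cosh x^2 / sinh x ^ 2 + xi * sinh x ^ 2)*(2*rho*sinh x*cosh x))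
    / (2*(1+rho*sinh x^2)^2)).
Proof.
  intros Hx Hr. pose proof (sinh_pos x Hx) as Hs.
  pose proof (exp_pos x) as He.
  assert (Hs' : exp x - / exp x <> 0).
  { unfold sinh in Hs. rewrite exp_Ropp in Hs. lra. }
  assert (Hs'' : exp x + / exp x <> 0).
  { pose proof (Rinv_0_lt_compat _ He). lra. }
  assert (Hp : 0 < exp x + / exp x).
  { pose proof (Rinv_0_lt_compat _ He). lra. }
  assert (HD : 0 < 1 + rho * sinh x ^ 2) by nra.
  unfold Ham, tanh, sinh, cosh in *. rewrite exp_Ropp in *.
  auto_derive; rewrite ?exp_Ropp.
  - repeat split; first [ (repeat (apply Rmult_integral_contrapositive_currified || apply Rinv_neq_0_compat); intro; lra) | (apply Rmult_integral_contrapositive_currified; [intro; lra|]; intro Hc; match type of Hc with ?a = 0 => assert (a = 1 + rho * ((exp x - / exp x) / 2) ^ 2) by (unfold Rdiv; ring) end; lra) ].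
  - set (u := exp x) in *. assert (Huu : 1 < u * u).
    { assert (0 < (u - / u) * u) by (apply Rmult_lt_0_compat; lra).
      replace ((u - / u) * u) with (u*u - 1) in H by (field; lra). lra. }
    field. pose proof (Rmult_le_pos rho ((u*u-1)^2) Hr (pow2_ge_0 _)). repeat split; intro; nra.
Qed.

Lemma dmul f g x df dg : is_derive f x df -> is_derive g x dg ->
  is_derive (fun t => f t * g t) x (df * g x + f x * dg).
Proof. intros. apply (is_derive_mult f g x df dg); auto. intros; apply Rmult_comm. Qed.
Lemma dplus f g x df dg : is_derive f x df -> is_derive g x dg ->
  is_derive (fun t => f t + g t) x (df + dg).
Proof. intros. apply (is_derive_plus f g x df dg); auto. Qed.
Lemma dminus f g x df dg : is_derive f x df -> is_derive g x dg ->
  is_derive (fun t => f t - g t) x (df - dg).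
Proof. intros. apply (is_derive_minus f g x df dg); auto. Qed.
Lemma dcomp f g x df dg : is_derive f (g x) df -> is_derive g x dg ->
  is_derive (fun t => f (g t)) x (dg * df).
Proof. intros. apply (is_derive_comp f g x df dg); auto. Qed.

Lemma dcos2 a x da : is_derive a x da -> is_derive (fun t => cos (2 * a t)) x (2 * da * - sin (2 * a x)).
Proof.
  intros H. apply (dcomp cos (fun t => 2 * a t)).
  - apply is_derive_Reals, derivable_pt_lim_cos.
  - apply (is_derive_scal a x 2 da H).
Qed.
Lemma dsin2 a x da : is_derive a x da -> is_derive (fun t => sin (2 * a t)) x (2 * da * cos (2 * a x)).
Proof.
  intros H. apply (dcomp sin (fun t => 2 * a t)).
  - apply is_derive_Reals, derivable_pt_lim_sin.
  - apply (is_derive_scal a x 2 da H).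
Qed.

Lemma const_fun F : (forall t, is_derive F t 0) -> forall t s, F t = F s.
Proof.
  intros H t s. destruct (Rtotal_order t s) as [h|[h|h]].
  - apply (eq_is_derive F); auto.
  - now subst.
  - symmetry. apply (eq_is_derive F); auto.
Qed.

Lemma rot_const (w q a w' q' a' : R -> R) :
 (forall t, is_derive w t (w' t)) -> (forall t, is_derive q t (q' t)) ->
 (forall t, is_derive a t (a' t)) ->
 (forall t, w' t = -2*q t*a' t) -> (forall t, q' t = 2*w t*a' t) ->
 forall t s, w t * cos(2*a t) + q t * sin(2*a t) = w s * cos(2*a s) + q s*sin(2*a s) /\
   w t * sin(2*a t) - q t * cos(2*a t) = w s * sin(2*a s) - q s * cos(2*a s).
Proof.
  intros Hw Hq Ha Ew Eq t s. split.
  - refine (const_fun (fun u => w u * cos(2*a u) + q u * sin(2*a u)) _ t s). intro u. assert (H := dplus _ _ u _ _ (dmul _ _ u _ _ (Hw u) (dcos2 a u _ (Ha u)))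
                                 (dmul _ _ u _ _ (Hq u) (dsin2 a u _ (Ha u)))).
    match type of H with is_derive _ _ ?l => replace 0 with l; auto end.
    rewrite Ew, Eq. ring.
  - refine (const_fun (fun u => w u * sin(2*a u) - q u * cos(2*a u)) _ t s). intro u. assert (H := dminus _ _ u _ _ (dmul _ _ u _ _ (Hw u) (dsin2 a u _ (Ha u)))
                                 (dmul _ _ u _ _ (Hq u) (dcos2 a u _ (Ha u)))).
    match type of H with is_derive _ _ ?l => replace 0 with l; auto end.
    rewrite Ew, Eq. ring.
Qed.

Lemma Dp rho xi x f p pp : 1 + rho * sinh x ^ 2 <> 0 ->
  Derive (fun q => Ham rho xi x f q pp) p = cosh x ^ 2 * p / (1 + rho * sinh x ^ 2).
Proof.
  intros HD. apply is_derive_unique. unfold Ham. auto_derive.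
  - auto.
  - replace (rho * (sinh x * (sinh x * 1))) with (rho * sinh x ^ 2) by ring. field. auto.
Qed.

Lemma Dpp rho xi x f p pp : 1 + rho * sinh x ^ 2 <> 0 -> tanh x <> 0 ->
  Derive (fun q => Ham rho xi x f p q) pp = pp / tanh x ^ 2 / (1 + rho * sinh x ^ 2).
Proof.
  intros HD HT. apply is_derive_unique. unfold Ham. auto_derive.
  - repeat split; auto.
  - replace (rho * (sinh x * (sinh x * 1))) with (rho * sinh x ^ 2) by ring. field. auto.
Qed.

Lemma dcoth x : 0 < sinh x -> is_derive (fun y => cosh y / sinh y) x (- 1 / sinh x ^ 2).
Proof.
  intros Hs.
  assert (H := is_derive_div cosh sinh x (sinh x) (cosh x)
     (proj2 (is_derive_Reals _ _ _) (derivable_pt_lim_cosh x)) (proj2 (is_derive_Reals _ _ _) (derivable_pt_lim_sinh x))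
     ltac:(lra)).
  replace (-1 / sinh x ^ 2) with ((sinh x * sinh x - cosh x * cosh x) / sinh x ^ 2); auto.
  unfold cosh, sinh in *. rewrite exp_Ropp in *. pose proof (exp_pos x).
  set (u := exp x) in *.
  assert (Huu : 1 < u * u).
  { assert (0 < (u - / u) * u) by (apply Rmult_lt_0_compat; lra).
    replace ((u - / u) * u) with (u*u - 1) in H1 by (field; lra). lra. }
  field. split; intro; nra.
Qed.

Lemma energy_id rho xi E L C S p : 0 < S -> 0 < C -> C^2 = 1 + S^2 -> 0 < 1 + rho*S^2 ->
  (C^2*p^2 + L^2/(S/C)^2 + xi*S^2)/(2*(1+rho*S^2)) = E ->
  (L*(C/S*p))^2 + (L^2*(C/S)^2 - (E+L^2/2))^2 = (E+L^2/2)^2 + L^2*sigma_par rho xi E.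
Proof.
  intros HS HC HCS HD H.
  assert (Hp2 : C^2*p^2 = 2*E*(1+rho*S^2) - L^2*C^2/S^2 - xi*S^2).
  { rewrite <- H. field. lra. }
  unfold sigma_par.
  replace ((L*(C/S*p))^2) with (L^2*(C^2*p^2)/S^2) by (field; lra).
  rewrite Hp2. replace ((C/S)^2) with (C^2/S^2) by (field; lra).
  rewrite HCS. field. lra.
Qed.

Lemma q_id rho xi E L C S p : 0 < S -> 0 < C -> C^2 = 1 + S^2 -> 0 < 1 + rho*S^2 ->
  (C^2*p^2 + L^2/(S/C)^2 + xi*S^2)/(2*(1+rho*S^2)) = E ->
  L*((C^2*p/(1+rho*S^2) * (-1/S^2)) * p + C/S * (-
   (((2*C*S*p^2 - 2*L^2*C/S^3 + 2*xi*S*C)*(1+rho*S^2)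
     - (C ^ 2 * p ^ 2 + L ^ 2 * C^2 / S ^ 2 + xi * S ^ 2)*(2*rho*S*C))
    / (2*(1+rho*S^2)^2))))
  = 2 * (L^2*(C/S)^2 - (E+L^2/2)) * (L/(S/C)^2/(1+rho*S^2)).
Proof.
  intros HS HC HCS HD H.
  assert (Hp2 : C^2*p^2 = 2*E*(1+rho*S^2) - L^2*C^2/S^2 - xi*S^2).
  { rewrite <- H. field. lra. }
  replace (C ^ 2 * p ^ 2 + L ^ 2 * C^2 / S ^ 2 + xi * S ^ 2) with (2*E*(1+rho*S^2)) by lra.
  replace (C*S*p^2) with (S/C*(C^2*p^2)) by (field; lra).
  replace (C^2*p/(1+rho*S^2) * (-1/S^2) * p) with (-(C^2*p^2)/(1+rho*S^2)/S^2) by (field; lra).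
  rewrite Hp2. field_simplify; try lra.
  assert (Hp : p^2 = (2*E*(1+rho*S^2) - L^2*C^2/S^2 - xi*S^2)/C^2).
  { rewrite <- Hp2. field. lra. }
  assert (HS4 : 0 < S^4) by (apply pow_lt; lra).
  assert (HR : rho * S ^ 6 + S ^ 4 <> 0).
  { replace (rho * S ^ 6 + S ^ 4) with (S^4*(1+rho*S^2)) by ring.
    apply Rgt_not_eq, Rmult_lt_0_compat; lra. }
  assert (H2 : 2 * rho ^ 2 * S ^ 8 + 4 * rho * S ^ 6 + 2 * S ^ 4 <> 0).
  { replace (2 * rho ^ 2 * S ^ 8 + 4 * rho * S ^ 6 + 2 * S ^ 4) with (2*S^4*(1+rho*S^2)^2) by ring.
    apply Rgt_not_eq, Rmult_lt_0_compat; try lra. apply pow_lt; lra. }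
  assert (H3 : rho ^ 2 * S ^ 8 + 2 * rho * S ^ 6 + S ^ 4 <> 0).
  { replace (rho ^ 2 * S ^ 8 + 2 * rho * S ^ 6 + S ^ 4) with (S^4*(1+rho*S^2)^2) by ring.
    apply Rgt_not_eq, Rmult_lt_0_compat; try lra. apply pow_lt; lra. }
  assert (HSn : S <> 0) by lra. assert (HCn : C <> 0) by lra.
  rewrite Hp. field_simplify; repeat split; auto.
  replace (C^4) with ((C^2)^2) by ring. rewrite HCS. field. repeat split; auto.
Qed.

Lemma coth2 x : 0 < sinh x -> (cosh x / sinh x) ^ 2 = 1 + / sinh x ^ 2.
Proof.
  intros H. replace ((cosh x / sinh x) ^ 2) with (cosh x ^ 2 / sinh x ^ 2) by (field; lra).
  rewrite ch2. field. lra.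
Qed.

Theorem proposition13 :
  forall (rho xi E L : R) (chi phi pchi pphi : R -> R),
    ((0 < rho < 1) \/ 1 < rho) ->
    0 < L ->
    hamiltonian_trajectory rho xi chi phi pchi pphi ->
    (forall t, Ham rho xi (chi t) (phi t) (pchi t) (pphi t) = E) ->
    (forall t, pphi t = L) ->
    (* normalization: phi = 0 (in S^1) at a point where chi is minimal *)
    (exists (t0 : R) (k : Z), (forall t, chi t0 <= chi t) /\ phi t0 = 2 * IZR k * PI) ->
    E_plus rho xi L <= E < xi / (2 * rho) ->
    xi - rho * L ^ 2 > 0 ->
    (forall t, L ^ 2 / tanh (chi t) ^ 2
               = (E + L ^ 2 / 2) * (1 + ecc rho xi E L * cos (2 * phi t))) /\
    0 <= ecc2 rho xi E L /\ ecc rho xi E L < 1.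
Proof.
  intros rho xi E L chi phi pchi pphi Hrho HL Htr HE Hpp [t0 [k [Hmin Hphi0]]] [HE1 HE2] Hxi.
  assert (Hr0 : 0 < rho) by lra.
  set (c := E + L^2/2).
  set (a := sqrt (xi + rho * (rho - 1) * L ^ 2)).
  assert (Hrad : rho^2 * L^2 < xi + rho * (rho - 1) * L ^ 2) by nra.
  assert (Ha2 : a * a = xi + rho * (rho - 1) * L ^ 2).
  { unfold a. apply sqrt_sqrt. nra. }
  assert (Ha0 : 0 <= a) by (unfold a; apply sqrt_pos).
  assert (Ha : rho * L < a) by nra.
  assert (Hc : 0 < c).
  { unfold c. unfold E_plus in HE1. fold a in HE1. nra. }
  assert (Hsig : sigma_par rho xi E < 0).
  { unfold sigma_par. destruct Hrho as [Hr|Hr].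
    - assert (0 <= 2*(1-rho)*(E - E_plus rho xi L)) by nra.
      unfold E_plus in H. fold a in H.
      assert (0 < (a + (1-rho)*L)^2) by (apply pow_lt; nra). nra.
    - assert (Hxi0 : 0 < xi) by nra.
      assert (2*rho*E < xi).
      { apply Rmult_lt_compat_l with (r := 2*rho) in HE2; [|lra].
        replace (2 * rho * (xi / (2 * rho))) with xi in HE2 by (field; lra). lra. }
      destruct (Rle_or_lt E 0); nra. }
  assert (He2 : ecc2 rho xi E L < 1).
  { unfold ecc2. fold c.
    assert (L ^ 2 * sigma_par rho xi E / c ^ 2 < 0).
    { unfold Rdiv. apply Rmult_neg_pos; [|apply Rinv_0_lt_compat, pow_lt; lra].
      assert (0 < L^2) by (apply pow_lt; lra). nra. }
    lra. }
  set (K := c^2 + L^2 * sigma_par rho xi E).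
  assert (HK : K = c^2 * ecc2 rho xi E L).
  { unfold K, ecc2. fold c. field. lra. }
  assert (Hx : forall t, 0 < chi t) by (intro t; apply (Htr t)).
  assert (HS : forall t, 0 < sinh (chi t)) by (intro t; apply sinh_pos, Hx).
  assert (HC : forall t, 0 < cosh (chi t)) by (intro t; apply cosh_pos).
  assert (HD : forall t, 0 < 1 + rho * sinh (chi t) ^ 2).
  { intro t. pose proof (pow2_ge_0 (sinh (chi t))). nra. }
  assert (HT : forall t, tanh (chi t) = sinh (chi t) / cosh (chi t)) by (intro; reflexivity).
  assert (HTn : forall t, tanh (chi t) <> 0).
  { intro t. rewrite HT. apply Rgt_not_eq. unfold Rdiv.
    apply Rmult_lt_0_compat; [apply HS | apply Rinv_0_lt_compat, HC]. }
  set (g := fun u => cosh (chi u) / sinh (chi u)).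
  set (chi' := fun u => cosh (chi u) ^ 2 * pchi u / (1 + rho * sinh (chi u) ^ 2)).
  set (phi' := fun u => L / tanh (chi u) ^ 2 / (1 + rho * sinh (chi u) ^ 2)).
  set (pchi' := fun u => - (((2*cosh (chi u)*sinh (chi u)*pchi u^2 - 2*L^2*cosh (chi u)/sinh (chi u)^3
         + 2*xi*sinh (chi u)*cosh (chi u))*(1+rho*sinh (chi u)^2)
     - (cosh (chi u) ^ 2 * pchi u ^ 2 + L ^ 2 * cosh (chi u)^2 / sinh (chi u) ^ 2 + xi * sinh (chi u) ^ 2)
        *(2*rho*sinh (chi u)*cosh (chi u)))
    / (2*(1+rho*sinh (chi u)^2)^2))).
  assert (Hchi : forall u, is_derive chi u (chi' u)).
  { intro u. destruct (Htr u) as [_ [H _]]. rewrite Dp in H; auto.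
    apply Rgt_not_eq, HD. }
  assert (Hphi : forall u, is_derive phi u (phi' u)).
  { intro u. destruct (Htr u) as [_ [_ [H _]]]. rewrite Dpp in H; auto.
    - unfold phi'. rewrite <- (Hpp u). auto.
    - apply Rgt_not_eq, HD. }
  assert (Hpchi : forall u, is_derive pchi u (pchi' u)).
  { intro u. destruct (Htr u) as [_ [_ [_ [H _]]]].
    pose proof (is_derive_unique _ _ _ (Dchi rho xi (chi u) (phi u) (pchi u) (pphi u) (Hx u) (Rlt_le _ _ Hr0))) as Hd.
    unfold pchi'. rewrite <- (Hpp u). rewrite <- Hd. exact H. }
  assert (Hg : forall u, is_derive g u (chi' u * (-1 / sinh (chi u) ^ 2))).
  { intro u. exact (dcomp (fun y => cosh y / sinh y) chi u _ _ (dcoth (chi u) (HS u)) (Hchi u)). }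
  set (w := fun u => L^2 * g u ^ 2 - c).
  set (w' := fun u => L^2 * (2 * g u * (chi' u * (-1 / sinh (chi u) ^ 2)))).
  set (q := fun u => L * (g u * pchi u)).
  set (q' := fun u => L * ((chi' u * (-1 / sinh (chi u) ^ 2)) * pchi u + g u * pchi' u)).
  assert (Hw : forall u, is_derive w u (w' u)).
  { intro u.
    assert (H := dminus _ _ u _ _ (is_derive_scal _ u (L^2) _ (dmul _ _ u _ _ (Hg u) (Hg u)))
                        (is_derive_const c u)).
    apply (is_derive_ext (fun t => L^2 * (g t * g t) - c)).
    - intro t. unfold w. change (L ^ 2 * (g t * g t) - c = L ^ 2 * g t ^ 2 - c). ring.
    - match type of H with is_derive _ _ ?l => replace (w' u) with l; auto end.
      unfold w'. simpl. unfold zero. simpl. ring. }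
  assert (Hq : forall u, is_derive q u (q' u)).
  { intro u. exact (is_derive_scal _ u L _ (dmul _ _ u _ _ (Hg u) (Hpchi u))). }
  assert (Hen : forall u, (cosh (chi u)^2*pchi u^2 + L^2/(sinh (chi u)/cosh (chi u))^2
      + xi*sinh (chi u)^2)/(2*(1+rho*sinh (chi u)^2)) = E).
  { intro u. rewrite <- (HE u). unfold Ham. rewrite (Hpp u). reflexivity. }
  assert (Ew : forall u, w' u = -2 * q u * phi' u).
  { intro u. unfold w', q, phi', chi', g. rewrite HT.
    pose proof (HS u). pose proof (HC u). pose proof (HD u). field. lra. }
  assert (Eq : forall u, q' u = 2 * w u * phi' u).
  { intro u. unfold q', w, phi', chi', g, pchi'. rewrite HT.
    apply q_id; auto. apply ch2. }
  pose proof (rot_const w q phi w' q' phi' Hw Hq Hphi Ew Eq) as HR.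
  assert (Hc0 : chi' t0 = 0).
  { pose (pr := exist (fun l => derivable_pt_lim chi t0 l) (chi' t0)
                  (proj1 (is_derive_Reals _ _ _) (Hchi t0)) : derivable_pt chi t0).
    assert (H := deriv_minimum chi (t0 - 1) (t0 + 1) t0 pr ltac:(lra) ltac:(lra)
                   (fun x _ _ => Hmin x)).
    exact H. }
  assert (Hp0 : pchi t0 = 0).
  { unfold chi' in Hc0. pose proof (HC t0). pose proof (HD t0).
    assert (0 < cosh (chi t0) ^ 2) by (apply pow_lt; lra).
    apply Rmult_integral in Hc0 as [Hm1|Hm1].
    - apply Rmult_integral in Hm1 as [Hm2|Hm2]; lra.
    - pose proof (Rinv_0_lt_compat _ (HD t0)). lra. }
  assert (Hq0 : q t0 = 0) by (unfold q; rewrite Hp0; ring).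
  assert (Hs0 : sin (2 * phi t0) = 0).
  { apply sin_eq_0_1. exists (4 * k)%Z. rewrite Hphi0, mult_IZR. ring. }
  assert (Hcs0 : cos (2 * phi t0) = 1).
  { rewrite cos_2a_sin. rewrite (sin_eq_0_1 (phi t0)). ring.
    exists (2 * k)%Z. rewrite Hphi0, mult_IZR. ring. }
  assert (Hwcos : forall u, w u = w t0 * cos (2 * phi u)).
  { intro u. destruct (HR u t0) as [H1 H2]. rewrite Hs0, Hcs0, Hq0 in *.
    pose proof (sin2_cos2 (2 * phi u)). unfold Rsqr in H.
    transitivity ((w u * cos (2 * phi u) + q u * sin (2 * phi u)) * cos (2 * phi u)
       + (w u * sin (2 * phi u) - q u * cos (2 * phi u)) * sin (2 * phi u)).
    - replace (w u) with (w u * (sin (2 * phi u) * sin (2 * phi u) + cos (2 * phi u) * cos (2 * phi u))) at 1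
        by (rewrite H; ring). ring.
    - rewrite H1, H2. ring. }
  assert (HwK : w t0 ^ 2 = K).
  { pose proof (energy_id rho xi E L (cosh (chi t0)) (sinh (chi t0)) (pchi t0)
       (HS t0) (HC t0) (ch2 _) (HD t0) (Hen t0)) as H.
    fold c in H. fold K in H. change (q t0 ^ 2 + w t0 ^ 2 = K) in H. rewrite Hq0 in H. lra. }
  assert (Hw0 : 0 <= w t0).
  { destruct (Rle_or_lt 0 (w t0)) as [h|h]; auto. exfalso.
    assert (Hle : forall u, w u <= w t0).
    { intro u. unfold w, g.
      assert (Hsl : sinh (chi t0) <= sinh (chi u)).
      { destruct (Rle_lt_or_eq_dec _ _ (Hmin u)) as [h1|h1].
        - left. apply sinh_lt; auto.
        - rewrite h1. lra. }
      replace ((cosh (chi u) / sinh (chi u)) ^ 2) with (1 + / (sinh (chi u) ^ 2))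
        by (symmetry; apply coth2, HS).
      replace ((cosh (chi t0) / sinh (chi t0)) ^ 2) with (1 + / (sinh (chi t0) ^ 2))
        by (symmetry; apply coth2, HS).
      assert (/ sinh (chi u) ^ 2 <= / sinh (chi t0) ^ 2).
      { apply Rinv_le_contravar. apply pow_lt, HS. apply pow_incr. split; auto.
        left; apply HS. }
      assert (0 < L^2) by (apply pow_lt; lra). nra. }
    assert (Hcos1 : forall u, cos (2 * phi u) = 1).
    { intro u. pose proof (Hle u). rewrite Hwcos in H. pose proof (COS_bound (2 * phi u)). nra. }
    assert (Hsin0 : forall u, sin (2 * phi u) = 0).
    { intro u. pose proof (sin2_cos2 (2 * phi u)). unfold Rsqr in H. rewrite Hcos1 in H. nra. }
    assert (Hd1 := dsin2 phi t0 _ (Hphi t0)).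
    assert (Hd2 : is_derive (fun t => sin (2 * phi t)) t0 0).
    { apply (is_derive_ext (fun _ => 0)). intro t. rewrite Hsin0. reflexivity.
      apply (is_derive_const 0 t0). }
    apply is_derive_unique in Hd1. apply is_derive_unique in Hd2.
    rewrite Hd1 in Hd2. rewrite Hcs0 in Hd2.
    assert (0 < phi' t0).
    { unfold phi'. unfold Rdiv. apply Rmult_lt_0_compat; [apply Rmult_lt_0_compat|].
      - lra.
      - apply Rinv_0_lt_compat, pow_lt. rewrite HT. unfold Rdiv.
        apply Rmult_lt_0_compat; [apply HS|apply Rinv_0_lt_compat, HC].
      - apply Rinv_0_lt_compat, HD. }
    lra. }
  assert (Hecc2 : 0 <= ecc2 rho xi E L).
  { assert (0 <= K) by (rewrite <- HwK; apply pow2_ge_0).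
    rewrite HK in H. assert (0 < c^2) by (apply pow_lt; lra).
    destruct (Rle_or_lt 0 (ecc2 rho xi E L)); auto. nra. }
  assert (Hw0e : w t0 = c * ecc rho xi E L).
  { rewrite <- (sqrt_pow2 (w t0) Hw0), HwK, HK, sqrt_mult_alt, sqrt_pow2; try lra.
    - reflexivity.
    - apply pow2_ge_0. }
  split; [|split]; auto.
  - intro u. rewrite (HT u).
    replace (L ^ 2 / (sinh (chi u) / cosh (chi u)) ^ 2) with (c + w u).
    + rewrite Hwcos, Hw0e. unfold c. ring.
    + unfold w, g, c. field. repeat split; try apply Rgt_not_eq; try apply HS; try apply HC.
  - unfold ecc. apply Rlt_le_trans with (sqrt 1); [apply sqrt_lt_1; lra | right; apply sqrt_1].
Qed.
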